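(* Let $(X,d)$ be a metric space and $f:\ell_\infty(X)\to X$. Then: (i) $f$ has a generalized contractive fixed point if and only if $\tilde f$ has a contractive fixed point with respect to the Tychonoff topology on $\ell_\infty(X)$; (ii) if $\mathbf{x}_*$ is a contractive fixed point of $\tilde f$ with respect to the Tychonoff topology, then $\mathbf{x}_*=(x_*,x_*,\dots)$, where $x_*$ is a generalized contractive fixed point of $f$.
   Context: $\mathbb{N}^*=\{0,1,2,\dots\}$; $\ell_\infty(X)$ is the set of all bounded sequences $(x_n)_{n\in\mathbb{N}^*}$ in $X$, and the Tychonoff topology on it is the subspace topology from $\prod_{n\in\mathbb{N}^*}X$. For $f:\ell_\infty(X)\to X$ define $\tilde f:\ell_\infty(X)\to\ell_\infty(X)$ by $\tilde f((x_n))=(f((x_n)),x_0,x_1,\dots)$. For $x\in\ell_\infty(X)$ put $\tilde{x}^0:=x$ and, for $k\ge1$, $x^k:=f(\tilde{x}^{k-1})$, $\tilde{x}^k:=\tilde f(\tilde{x}^{k-1})$; $(x^k)$ is the sequence of generalized iterates of $f$ at $x$. A point $x_*\in X$ is a generalized fixed point of $f$ if $f(x_*,x_*,\dots)=x_*$; it is a generalized contractive fixed point (GCFP) if moreover for every $x\in\ell_\infty(X)$ the sequence of generalized iterates of $f$ at $x$ converges to $x_*$. For a selfmap $g$ of a topological space $Y$, a fixed point $y_*$ of $g$ is a contractive fixed point (CFP) if $g^k(y)\to y_*$ for every $y\in Y$. *)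

(* Defs.v *)
From Stdlib Require Import Reals Lra.
Open Scope R_scope.

Definition is_metric {X : Type} (d : X -> X -> R) : Prop :=
  (forall x y, 0 <= d x y) /\
  (forall x y, d x y = 0 <-> x = y) /\
  (forall x y, d x y = d y x) /\
  (forall x y z, d x z <= d x y + d y z).

Definition bounded_seq {X : Type} (d : X -> X -> R) (x : nat -> X) : Prop :=
  exists M, forall n m, d (x n) (x m) <= M.

Definition linf {X : Type} (d : X -> X -> R) : Type := { x : nat -> X | bounded_seq d x }.

Definition shift_in {X : Type} (a : X) (x : nat -> X) : nat -> X :=
  fun n => match n with O => a | S k => x k end.

Lemma shift_in_bounded {X : Type} (d : X -> X -> R) (Hd : is_metric d)
  (a : X) (x : nat -> X) : bounded_seq d x -> bounded_seq d (shift_in a x).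
Proof.
  destruct Hd as [Hnn [H0 [Hs Ht]]].
  intros [M HM]. exists (M + d a (x O)).
  assert (HM0 : 0 <= M) by (specialize (HM O O); specialize (Hnn (x O) (x O)); lra).
  assert (Hc : 0 <= d a (x O)) by apply Hnn.
  assert (Haa : d a a = 0) by (apply H0; reflexivity).
  intros [|n] [|m]; simpl.
  - lra.
  - specialize (Ht a (x O) (x m)). specialize (HM O m). lra.
  - specialize (Ht (x n) (x O) a). specialize (HM n O). rewrite (Hs (x O) a) in Ht. lra.
  - specialize (HM n m). lra.
Qed.

Definition ftilde {X : Type} (d : X -> X -> R) (Hd : is_metric d)
  (f : linf d -> X) (x : linf d) : linf d :=
  exist _ (shift_in (f x) (proj1_sig x))
        (shift_in_bounded d Hd (f x) (proj1_sig x) (proj2_sig x)).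

Lemma const_bounded {X : Type} (d : X -> X -> R) (Hd : is_metric d) (a : X) :
  bounded_seq d (fun _ => a).
Proof. exists (d a a). intros; lra. Qed.

Definition const_seq {X : Type} (d : X -> X -> R) (Hd : is_metric d) (a : X) : linf d :=
  exist _ (fun _ => a) (const_bounded d Hd a).

Definition cv_metric {X : Type} (d : X -> X -> R) (u : nat -> X) (l : X) : Prop :=
  forall eps, eps > 0 -> exists K, forall k, (k >= K)%nat -> d (u k) l < eps.

(* Convergence in the Tychonoff (product) topology on l_inf(X), i.e. the subspace
   topology of prod_n X, expressed through its standard base of cylinders
   { y | forall n < N, d (y n) (l n) < eps }. *)
Definition cv_tych {X : Type} (d : X -> X -> R) (s : nat -> linf d) (l : linf d) : Prop :=
  forall (N : nat) (eps : R), eps > 0 ->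
    exists K, forall k, (k >= K)%nat ->
      forall n, (n < N)%nat -> d (proj1_sig (s k) n) (proj1_sig l n) < eps.

(* Generalized iterates: x^k = f(tilde x^{k-1}), tilde x^k = ftilde^k(x).
   giter k = x^{k+1} = f (ftilde^k x), k >= 0 (so the sequence (x^k)_{k>=1}). *)
Definition giter {X : Type} (d : X -> X -> R) (Hd : is_metric d)
  (f : linf d -> X) (x : linf d) (k : nat) : X :=
  f (Nat.iter k (ftilde d Hd f) x).

Definition is_GCFP {X : Type} (d : X -> X -> R) (Hd : is_metric d)
  (f : linf d -> X) (xs : X) : Prop :=
  f (const_seq d Hd xs) = xs /\
  forall x : linf d, cv_metric d (giter d Hd f x) xs.

Definition is_CFP_tych {X : Type} (d : X -> X -> R)
  (g : linf d -> linf d) (ys : linf d) : Prop :=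
  g ys = ys /\ forall y : linf d, cv_tych d (fun k => Nat.iter k g y) ys.

(* Main.v *)
Require Import Defs.
From Stdlib Require Import Reals Lra Lia ProofIrrelevance FunctionalExtensionality.
Open Scope R_scope.

Lemma linf_eq {X : Type} (d : X -> X -> R) (a b : linf d) :
  proj1_sig a = proj1_sig b -> a = b.
Proof.
  destruct a as [a pa], b as [b pb]; simpl; intros ->.
  f_equal; apply proof_irrelevance.
Qed.

Lemma iter_comp {X : Type} (d : X -> X -> R) (Hd : is_metric d)
  (f : linf d -> X) (x : linf d) :
  forall n j, proj1_sig (Nat.iter (n + S j) (ftilde d Hd f) x) n = giter d Hd f x j.
Proof.
  induction n; intros j.
  - reflexivity.
  - simpl. apply IHn.
Qed.

Lemma part2 (X : Type) (d : X -> X -> R) (Hd : is_metric d)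
  (f : linf d -> X) (ys : linf d) : is_CFP_tych d (ftilde d Hd f) ys ->
     exists xs : X, proj1_sig ys = (fun _ => xs) /\ is_GCFP d Hd f xs.
Proof.
  intros [Hfix Hcv].
  assert (Hy : proj1_sig (ftilde d Hd f ys) = proj1_sig ys) by (rewrite Hfix; reflexivity).
  simpl in Hy.
  assert (Hc : forall n, proj1_sig ys n = proj1_sig ys 0%nat).
  { induction n; [reflexivity|].
    rewrite <- IHn. change (proj1_sig ys n) with (shift_in (f ys) (proj1_sig ys) (S n)). rewrite Hy. reflexivity. }
  exists (proj1_sig ys 0%nat).
  assert (He : proj1_sig ys = (fun _ => proj1_sig ys 0%nat)).
  { apply functional_extensionality; exact Hc. }
  split; [exact He|]. split.
  - assert (Hq : const_seq d Hd (proj1_sig ys 0%nat) = ys) by (apply linf_eq; simpl; symmetry; exact He).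
    rewrite Hq. change (f ys) with (shift_in (f ys) (proj1_sig ys) 0%nat). rewrite Hy. reflexivity.
  - intros x eps Heps. destruct (Hcv x 1%nat eps Heps) as [K HK].
    exists K. intros k Hk.
    specialize (HK (S k) ltac:(lia) 0%nat ltac:(lia)).
    exact HK.
Qed.

Theorem mainTheorem8 (X : Type) (d : X -> X -> R) (Hd : is_metric d)
  (f : linf d -> X) :
  ((exists xs : X, is_GCFP d Hd f xs) <->
   (exists ys : linf d, is_CFP_tych d (ftilde d Hd f) ys)) /\
  (forall ys : linf d, is_CFP_tych d (ftilde d Hd f) ys ->
     exists xs : X, proj1_sig ys = (fun _ => xs) /\ is_GCFP d Hd f xs).
Proof.
  split; [split|].
  - intros [xs [Hf Hcv]]. exists (const_seq d Hd xs). split.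
    + apply linf_eq. simpl. apply functional_extensionality. intros [|n]; simpl; auto.
    + intros x N. induction N; intros eps Heps.
      * exists O. intros; lia.
      * destruct (IHN eps Heps) as [K1 HK1].
        destruct (Hcv x eps Heps) as [K2 HK2].
        exists (Nat.max K1 (K2 + N + 1)). intros k Hk n Hn.
        destruct (Nat.lt_ge_cases n N) as [Hl|Hl].
        -- apply HK1; lia.
        -- assert (n = N) by lia. subst n.
           replace k with (N + S (k - N - 1))%nat by lia.
           rewrite iter_comp. simpl. apply HK2. lia.
  - intros [ys H]. destruct (part2 X d Hd f ys H) as [xs [_ G]]. exists xs; exact G.
  - apply part2.
Qed.
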